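(* For every finite subset $B\subseteq A$ and every $c\in A\setminus\mathrm{Cl}(B)$, there exists a permutation $\pi\in\mathcal{G}$ that fixes $B$ pointwise and satisfies $\pi(c)\neq c$.
   Context: Let $\langle P,\preccurlyeq,\preccurlyeq^\ast\rangle$ be a doubly ordered set: $\preccurlyeq$ a partial order on $P$, $\preccurlyeq^\ast$ a preorder on $P$, and $p\preccurlyeq q\Rightarrow p\preccurlyeq^\ast q$. Write $p\prec q$ for ($p\preccurlyeq q$ and $p\neq q$). For a quadruple $\langle x_0,x_1,x_2,x_3\rangle$ and $i<4$, $\mathrm{pr}_i(\langle x_0,x_1,x_2,x_3\rangle)=x_i$. For a set $S$, $\mathscr{S}(S)$ is the set of permutations of $S$. Define recursively $A_0=\{\langle0,p,\varnothing,k\rangle\mid p\in P,k\in\omega\}$ and $A_{n+1}=A_n\cup\{\langle n+1,q,a,0\rangle\mid q\in P,a\in A_n,\mathrm{pr}_1(a)\prec q\}\cup\{\langle n+1,q,a,k\rangle\mid q\in P,a\in A_n,\mathrm{pr}_1(a)\not\preccurlyeq q,\mathrm{pr}_1(a)\preccurlyeq^\ast q,k\in\omega\}$; let $A=\bigcup_{n}A_n$. Define $\mathcal{G}_0=\{f\in\mathscr{S}(A_0)\mid \mathrm{pr}_1(f(a))=\mathrm{pr}_1(a)\text{ for all }a\in A_0\}$; for $f\in\mathscr{S}(A_{n+1})$, $f\in\mathcal{G}_{n+1}$ iff $f{\upharpoonright}A_n\in\mathcal{G}_n$ and for all $b\in A_{n+1}\setminus A_n$, $\mathrm{pr}_1(f(b))=\mathrm{pr}_1(b)$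 and $\mathrm{pr}_2(f(b))=f(\mathrm{pr}_2(b))$. Let $\mathcal{G}=\{\pi\in\mathscr{S}(A)\mid \pi{\upharpoonright}A_n\in\mathcal{G}_n\text{ for all }n\}$. A subset $C\subseteq A$ is closed if (i) for all $n\in\omega$, all $a\in C\cap A_n$ and all $q\in P$ with $\mathrm{pr}_1(a)\prec q$, we have $\langle n+1,q,a,0\rangle\in C$, and (ii) for all $b\in C\setminus A_0$, $\mathrm{pr}_2(b)\in C$. For $B\subseteq A$, $\mathrm{Cl}(B)$ is the least closed subset of $A$ including $B$. *)

(* Defs.v *)
From Stdlib Require Import List.

(* Quadruples <n, p, a, k>; the second component a is either the empty set
   (None, only at level 0) or an element of A (Some a). *)
Inductive quad (P : Type) : Type :=
  Q : nat -> P -> option (quad P) -> nat -> quad P.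
Arguments Q {P} _ _ _ _.

Definition pr0 {P} (x : quad P) : nat := let 'Q n _ _ _ := x in n.
Definition pr1 {P} (x : quad P) : P := let 'Q _ p _ _ := x in p.
Definition pr2 {P} (x : quad P) : option (quad P) := let 'Q _ _ a _ := x in a.
Definition pr3 {P} (x : quad P) : nat := let 'Q _ _ _ k := x in k.

Section Defs.
Context {P : Type} (le lestar : P -> P -> Prop).

Definition lt (p q : P) : Prop := le p q /\ p <> q.

Fixpoint An (n : nat) (x : quad P) : Prop :=
  match n with
  | 0 => exists p k, x = Q 0 p None k
  | S m =>
      An m x
      \/ (exists q a, An m a /\ lt (pr1 a) q /\ x = Q (S m) q (Some a) 0)
      \/ (exists q a k, An m a /\ ~ le (pr1 a) q /\ lestar (pr1 a) q
                        /\ x = Q (S m) q (Some a) k)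
  end.

Definition inA (x : quad P) : Prop := exists n, An n x.

Definition isPermOn (S : quad P -> Prop) (f : quad P -> quad P) : Prop :=
  (forall x, S x -> S (f x))
  /\ (forall x y, S x -> S y -> f x = f y -> x = y)
  /\ (forall y, S y -> exists x, S x /\ f x = y).

(* Gn n f  :<->  f restricted to A_n belongs to G_n *)
Fixpoint Gn (n : nat) (f : quad P -> quad P) : Prop :=
  match n with
  | 0 => isPermOn (An 0) f /\ (forall a, An 0 a -> pr1 (f a) = pr1 a)
  | S m =>
      isPermOn (An (S m)) f /\ Gn m f
      /\ (forall b, An (S m) b -> ~ An m b ->
            pr1 (f b) = pr1 b /\ pr2 (f b) = option_map f (pr2 b))
  end.

(* pi in G, pi seen as a function on quadruples whose restriction to A is a
   permutation of A *)
Definition inG (pi : quad P -> quad P) : Prop :=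
  isPermOn inA pi /\ forall n, Gn n pi.

Definition closed (C : quad P -> Prop) : Prop :=
  (forall x, C x -> inA x)
  /\ (forall n a q, C a -> An n a -> lt (pr1 a) q -> C (Q (S n) q (Some a) 0))
  /\ (forall b, C b -> ~ An 0 b -> exists a, pr2 b = Some a /\ C a).

Definition Cl (B : quad P -> Prop) (x : quad P) : Prop :=
  forall C, closed C -> (forall y, B y -> C y) -> C x.

Definition finite_set (B : quad P -> Prop) : Prop :=
  exists l : list (quad P), forall x, B x <-> In x l.

End Defs.

(* Main.v *)
Require Import Defs.
From Stdlib Require Import List Arith Lia ClassicalEpsilon.

Definition optP {P} (R : quad P -> Prop) (o : option (quad P)) : Prop :=
  match o with Some a => R a | None => True end.

Fixpoint quad_ind' {P} (R : quad P -> Prop)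
  (H : forall n p o k, optP R o -> R (Q n p o k)) (x : quad P) : R x :=
  match x with
  | Q n p o k => H n p o k
      (match o as o0 return optP R o0 with
       | None => I
       | Some a => quad_ind' R H a end)
  end.

Fixpoint inchain {P} (y x : quad P) : Prop :=
  y = x \/ match x with Q _ _ (Some a) _ => inchain y a | _ => False end.

Fixpoint depth {P} (x : quad P) : nat :=
  match x with Q _ _ None _ => 0 | Q _ _ (Some a) _ => S (depth a) end.

Fixpoint maxk {P} (x : quad P) : nat :=
  match x with Q _ _ None k => k | Q _ _ (Some a) k => max k (maxk a) end.

Lemma inchain_depth {P} (y x : quad P) : inchain y x -> depth y <= depth x.
Proof.
  revert y; induction x as [n p o k IH] using quad_ind'; intros y H.
  destruct H as [->|H]; auto.
  destruct o as [a|]; [|contradiction]. simpl in IH |- *. specialize (IH y H). lia.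
Qed.

Lemma inchain_maxk {P} (y x : quad P) : inchain y x -> pr3 y <= maxk x.
Proof.
  revert y; induction x as [n p o k IH] using quad_ind'; intros y H.
  destruct H as [->|H]; [destruct o; simpl; lia|].
  destruct o as [a|]; [|contradiction]. simpl in IH |- *. specialize (IH y H). lia.
Qed.

Lemma inchain_eq {P} (y1 y2 x : quad P) : inchain y1 x -> inchain y2 x -> depth y1 = depth y2 -> y1 = y2.
Proof.
  revert y1 y2; induction x as [n p o k IH] using quad_ind'; intros y1 y2 H1 H2 E.
  destruct H1 as [->|H1]; destruct H2 as [->|H2]; auto.
  - destruct o as [a|]; [|contradiction]. apply inchain_depth in H2. simpl in *. lia.
  - destruct o as [a|]; [|contradiction]. apply inchain_depth in H1. simpl in *. lia.
  - destruct o as [a|]; [|contradiction]. simpl in IH. eauto.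
Qed.

Definition dec (A : Prop) : {A} + {~A} := excluded_middle_informative A.

Fixpoint sw {P} (u v : quad P) (x : quad P) : quad P :=
  match x with
  | Q n p o k =>
      if dec (Q n p o k = u) then v else if dec (Q n p o k = v) then u else
      Q n p (match o with None => None | Some a => Some (sw u v a) end) k
  end.

Lemma sw_id {P} (u v x : quad P) : ~ inchain u x -> ~ inchain v x -> sw u v x = x.
Proof.
  induction x as [n p o k IH] using quad_ind'; intros Hu Hv; simpl.
  destruct (dec _) as [e|]; [subst; exfalso; apply Hu; left; auto|].
  destruct (dec _) as [e|]; [subst; exfalso; apply Hv; left; auto|].
  destruct o as [a|]; auto. simpl in IH. rewrite IH; auto.
  - intro; apply Hu; right; auto.
  - intro; apply Hv; right; auto.
Qed.

Section Sw.
Lemma sw_sw {P} n0 p0 o0 k0 k' (x : quad P) :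
  k0 <> k' ->
  let u := Q n0 p0 o0 k0 in let v := Q n0 p0 o0 k' in
  sw u v (sw u v x) = x.
Proof.
  intros Hk u v.
  assert (Huv : u <> v) by (unfold u, v; intro E; injection E; auto).
  assert (Hpar : forall w, o0 = Some w -> sw u v w = w).
  { intros w ->. apply sw_id; intro H; apply inchain_depth in H; unfold u, v in H; simpl in H; lia. }
  induction x as [n p o k IH] using quad_ind'.
  simpl sw at 2.
  destruct (dec (Q n p o k = u)) as [e|ne].
  { rewrite e. unfold v at 1. simpl. destruct (dec _) as [e'|]; [exfalso; apply Huv; auto|].
    destruct (dec _); [auto|tauto]. }
  destruct (dec (Q n p o k = v)) as [e|ne'].
  { rewrite e. unfold u at 1. simpl. destruct (dec _); [auto|tauto]. }
  assert (Hsx : forall y, Q n p (match o with None => None | Some a => Some (sw u v a) end) k = y ->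
              y = u \/ y = v -> False).
  { intros y Ey Hy. destruct o as [a|].
    - simpl in IH. assert (Ey' : Q n p (Some (sw u v a)) k = Q n0 p0 o0 (pr3 y)).
      { destruct Hy as [->| ->]; exact Ey. }
      injection Ey'; intros _ Eo _ _.
      pose proof (Hpar _ (eq_sym Eo)) as H1. rewrite IH in H1.
      rewrite <- H1 in Ey.
      destruct Hy as [->| ->]; [apply ne|apply ne']; exact Ey.
    - destruct Hy as [->| ->]; auto. }
  simpl. destruct (dec _) as [e|]; [exfalso; eapply Hsx; eauto|].
  destruct (dec _) as [e|]; [exfalso; eapply Hsx; eauto|].
  destruct o as [a|]; auto. simpl in IH. rewrite IH; auto.
Qed.
End Sw.

Lemma sw_pr1 {P} n0 p0 o0 k0 k' (x : quad P) :
  pr1 (sw (Q n0 p0 o0 k0) (Q n0 p0 o0 k') x) = pr1 x.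
Proof.
  destruct x as [n p o k]; simpl.
  destruct (dec _) as [e|]; [injection e; intros; simpl; congruence|].
  destruct (dec _) as [e|]; [injection e; intros; simpl; congruence|]. auto.
Qed.

Lemma sw_pr2 {P} n0 p0 o0 k0 k' (x : quad P) :
  pr2 (sw (Q n0 p0 o0 k0) (Q n0 p0 o0 k') x) = option_map (sw (Q n0 p0 o0 k0) (Q n0 p0 o0 k')) (pr2 x).
Proof.
  assert (Hpar : forall w, o0 = Some w -> sw (Q n0 p0 o0 k0) (Q n0 p0 o0 k') w = w).
  { intros w ->. apply sw_id; intro H; apply inchain_depth in H; simpl in H; lia. }
  destruct x as [n p o k]; simpl.
  destruct (dec _) as [e|]; [injection e; intros _ Eo _ _; rewrite Eo; simpl; destruct o0; simpl; [rewrite Hpar|]; auto|].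
  destruct (dec _) as [e|]; [injection e; intros _ Eo _ _; rewrite Eo; simpl; destruct o0; simpl; [rewrite Hpar|]; auto|].
  destruct o; auto.
Qed.

Lemma sw_move {P} n0 p0 o0 k0 k' (x : quad P) : k0 <> k' ->
  inchain (Q n0 p0 o0 k0) x -> inchain (Q n0 p0 o0 k') (sw (Q n0 p0 o0 k0) (Q n0 p0 o0 k') x).
Proof.
  intros Hk. induction x as [n p o k IH] using quad_ind'; intros H.
  simpl sw. destruct (dec _) as [e|ne]; [left; auto|].
  destruct (dec _) as [e|ne'].
  { exfalso. rewrite e in H.
    assert (E : Q n0 p0 o0 k0 = Q n0 p0 o0 k') by
      (apply (inchain_eq _ _ _ H (or_introl eq_refl)); destruct o0; reflexivity).
    injection E; auto. }
  destruct H as [H|H]; [congruence|].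
  destruct o as [a|]; [|contradiction]. right. simpl in IH. auto.
Qed.

Lemma An_inv {P} (le lestar : P -> P -> Prop) n x : An le lestar n x ->
  (exists p k, x = Q 0 p None k) \/
  (exists m q a k, x = Q (S m) q (Some a) k /\ An le lestar m a /\
     ((lt le (pr1 a) q /\ k = 0) \/ (~ le (pr1 a) q /\ lestar (pr1 a) q))).
Proof.
  revert x; induction n; intros x H; simpl in H.
  - left; exact H.
  - destruct H as [H|[(q&a&H1&H2&->)|(q&a&k&H1&H2&H3&->)]]; auto.
    + right. exists n, q, a, 0. auto.
    + right. exists n, q, a, k. auto.
Qed.

Lemma An_S {P} (le lestar : P -> P -> Prop) m x : An le lestar m x -> An le lestar (S m) x.
Proof. intros; simpl; auto. Qed.

Lemma An_le {P} (le lestar : P -> P -> Prop) m n x : m <= n -> An le lestar m x -> An le lestar n x.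
Proof. induction 1; auto. intros; apply An_S; auto. Qed.

Lemma sw_An {P} (le lestar : P -> P -> Prop) n0 p0 o0 k0 k' :
  match o0 with None => True | Some a => ~ le (pr1 a) p0 end ->
  forall n x, An le lestar n x -> An le lestar n (sw (Q n0 p0 o0 k0) (Q n0 p0 o0 k') x).
Proof.
  intros Hfree n. induction n; intros x H.
  - destruct H as (p&k&->). simpl.
    destruct (dec _) as [e|]; [injection e; intros; subst; simpl; eauto|].
    destruct (dec _) as [e|]; [injection e; intros; subst; simpl; eauto|].
    simpl; eauto.
  - simpl in H. destruct H as [H|[(q&a&H1&H2&->)|(q&a&k&H1&H2&H3&->)]].
    + apply An_S; auto.
    + simpl. destruct (dec _) as [e|]; [injection e; intros; subst; simpl in Hfree; destruct H2; contradiction|].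
      destruct (dec _) as [e|]; [injection e; intros; subst; simpl in Hfree; destruct H2; contradiction|].
      simpl. right; left. exists q, (sw (Q n0 p0 o0 k0) (Q n0 p0 o0 k') a).
      rewrite sw_pr1. auto.
    + simpl. destruct (dec _) as [e|]; [injection e; intros; subst; simpl; right; right; eauto 10|].
      destruct (dec _) as [e|]; [injection e; intros; subst; simpl; right; right; eauto 10|].
      simpl. right; right. exists q, (sw (Q n0 p0 o0 k0) (Q n0 p0 o0 k') a), k.
      rewrite sw_pr1. auto.
Qed.

Lemma closed_down {P} (le lestar : P -> P -> Prop) C (x y : quad P) :
  closed le lestar C -> C x -> inchain y x -> C y.
Proof.
  intros HC. revert y. induction x as [n p o k IH] using quad_ind'; intros y Hx H.
  destruct H as [->|H]; auto.
  destruct o as [a|]; [|contradiction]. simpl in IH.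
  destruct HC as (_&_&HC).
  destruct (HC _ Hx) as (a'&Ea&Ca).
  { intros (p'&k'&E). discriminate. }
  simpl in Ea. injection Ea; intros <-. auto.
Qed.

Lemma find_free {P} (le lestar : P -> P -> Prop) B (x : quad P) :
  inA le lestar x -> ~ Cl le lestar B x ->
  exists n0 p0 o0 k0, inchain (Q n0 p0 o0 k0) x /\ inA le lestar (Q n0 p0 o0 k0)
    /\ ~ Cl le lestar B (Q n0 p0 o0 k0)
    /\ match o0 with None => True | Some a => ~ le (pr1 a) p0 end.
Proof.
  induction x as [n p o k IH] using quad_ind'; intros HA HC.
  destruct HA as [N HN].
  destruct (An_inv _ _ _ _ HN) as [(p'&k'&E)|(m&q&a&k'&E&Ha&Hf)].
  - exists n, p, o, k. split; [left; reflexivity|]. split; [exists N; exact HN|].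
    split; [exact HC|]. injection E; intros _ -> _ _; exact I.
  - injection E; intros E1 E2 E3 E4; subst.
    destruct Hf as [[Hlt ->]|[Hnl _]].
    + simpl in IH. destruct (IH (ex_intro _ m Ha)) as (n0&p0&o0&k0&H1&H2&H3&H4).
      { intro Hc. apply HC. intros C HCl HB.
        pose proof HCl as (HCA&HCi&HCii). exact (HCi m a q (Hc C HCl HB) Ha Hlt). }
      exists n0, p0, o0, k0. split; [right; exact H1|]. auto.
    + exists (S m), q, (Some a), k'. split; [left; reflexivity|].
      split; [exists N; exact HN|]. split; [exact HC|exact Hnl].
Qed.

Fixpoint sumk {P} (l : list (quad P)) : nat :=
  match l with nil => 0 | b :: l => maxk b + sumk l end.

Lemma sumk_in {P} (l : list (quad P)) b : In b l -> maxk b <= sumk l.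
Proof. induction l; simpl; [tauto|]. intros [->|H]; [lia|]. specialize (IHl H); lia. Qed.

Theorem lemma2p4 (P : Type) (le lestar : P -> P -> Prop)
  (le_refl : forall p, le p p)
  (le_antisym : forall p q, le p q -> le q p -> p = q)
  (le_trans : forall p q r, le p q -> le q r -> le p r)
  (lestar_refl : forall p, lestar p p)
  (lestar_trans : forall p q r, lestar p q -> lestar q r -> lestar p r)
  (le_lestar : forall p q, le p q -> lestar p q)
  (B : quad P -> Prop) (c : quad P) :
  finite_set B ->
  (forall x, B x -> inA le lestar x) ->
  inA le lestar c ->
  ~ Cl le lestar B c ->
  exists pi : quad P -> quad P,
    inG le lestar pi /\ (forall x, B x -> pi x = x) /\ pi c <> c.
Proof.
  intros [l Hl] HBA HcA HcC.
  destruct (find_free le lestar B c HcA HcC) as (n0&p0&o0&k0&Huc&HuA&HuC&Hfree).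
  set (k' := S (k0 + sumk l)).
  assert (Hk : k0 <> k') by (unfold k'; lia).
  set (u := Q n0 p0 o0 k0). set (v := Q n0 p0 o0 k').
  exists (sw u v).
  assert (HAn := sw_An le lestar n0 p0 o0 k0 k' Hfree).
  assert (Hinv := fun x => sw_sw n0 p0 o0 k0 k' x Hk).
  fold u v in HAn, Hinv. simpl in Hinv.
  assert (Hperm : forall S, (forall x, S x -> S (sw u v x)) -> isPermOn S (sw u v)).
  { intros S HS. split; [auto|split].
    - intros x y _ _ E. rewrite <- (Hinv x), <- (Hinv y), E. auto.
    - intros y Hy. exists (sw u v y). split; auto. }
  split; [split|split].
  - apply Hperm. intros x [n Hn]. exists n; auto.
  - intro n. induction n.
    + simpl. split; [apply Hperm; intros x H; exact (HAn 0 x H)|]. intros; apply sw_pr1.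
    + simpl. split; [apply Hperm; intros x H; exact (HAn (S n) x H)|]. split; auto. intros b _ _. split.
      * apply sw_pr1.
      * apply sw_pr2.
  - intros x Hx. apply sw_id.
    + intro H. apply HuC. intros C HCl HCB. eapply closed_down; eauto.
    + intro H. apply inchain_maxk in H. apply Hl in Hx. apply sumk_in in Hx.
      unfold v, k' in H. simpl in H. lia.
  - intro E. pose proof (sw_move n0 p0 o0 k0 k' c Hk Huc) as H. fold u v in H.
    rewrite E in H.
    assert (E2 : u = v) by (apply (inchain_eq _ _ _ Huc H); destruct o0; reflexivity).
    unfold u, v in E2. injection E2; auto.
Qed.
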